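(* In the setting described in the context, for every ordered subset $J$ of $\{1,\ldots,|L|\}$ with $1\leqslant |J|\leqslant n-1$, the line $\ell_J$ and the point $p_J$ are well-defined (that is, the intersections defining them are a line, respectively a point). Distinct ordered subsets $J$ give distinct lines $\ell_J$ and distinct points $p_J$. Furthermore, the line $\ell_J$ intersects $\pi_{|J|+1}$ in the point $p_J$.
   Context: Let ${\mathbb K}$ be a field, $n\geqslant 2$, and consider the projective space $\mathrm{PG}_n({\mathbb K})$. For two non-intersecting subspaces $x,y$, $x\oplus y$ denotes the subspace they span. Fix points $x_0,x_1,\ldots,x_n$ of $\mathrm{PG}_n({\mathbb K})$ in general position and put $\Sigma_i=x_0\oplus x_1\oplus\cdots\oplus x_i$ and $\pi_i=x_1\oplus\cdots\oplus x_i$ for $i=1,\ldots,n$. For $i=3,\ldots,n$ let $y_i$ be a point on the line $x_{i-1}\oplus x_i$ different from $x_{i-1}$ and $x_i$. Let $L$ be a finite set of lines of the plane $\Sigma_2$ which meet the line $\pi_2$ in pairwise distinct points, all different from $x_2$. Label the lines of $L$ as $\ell_{\{1\}},\ldots,\ell_{\{|L|\}}$ and put $p_{\{i\}}=\ell_{\{i\}}\cap\pi_2$. An ordered subset $J$ of $\{1,\ldots,|L|\}$ is a finite sequence of distinct elements of $\{1,\ldots,|L|\}$; if $|J|\geqslant 2$ write $J=(\ldots,b,a)$ where $a$ is the last and $b$ the second-to-last element, and let $J\setminus\{a\}$, $J\setminus\{b\}$ be the ordered subsets obtained by deleting $a$, respectively $b$ (keeping the order). For $2\leqslant |J|\leqslant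 n-1$ define recursively $$\ell_J=(x_{|J|+1}\oplus \ell_{J\setminus\{a\}})\cap(y_{|J|+1}\oplus \ell_{J\setminus\{b\}}),\qquad p_J=(x_{|J|+1}\oplus p_{J\setminus\{a\}})\cap(y_{|J|+1}\oplus p_{J\setminus\{b\}}).$$ *)

(* Defs.v *)
(* Projective space PG_n(K) = lattice of subspaces of K^(n+1);
   a subspace is represented by a square matrix 'M[K]_(n.+1) (its row space),
   span = (_ + _)%MS, intersection = (_ :&: _)%MS, equality of subspaces = (_ == _)%MS,
   points = rank 1, lines = rank 2. *)
From HB Require Import structures.
From mathcomp Require Import all_boot all_order all_algebra.
Set Implicit Arguments.
Unset Strict Implicit.
Unset Printing Implicit Defensive.
Import GRing.Theory.
Local Open Scope ring_scope.

Section Defs.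
Variables (K : fieldType) (n : nat).
Local Notation sp := 'M[K]_(n.+1).

(* points x_0, ..., x_n (indexed by nat, only i <= n matter) in general position:
   every subset S of them spans a subspace of vector dimension |S|. *)
Definition gen_pos (x : nat -> sp) : Prop :=
  forall S : {set 'I_(n.+1)}, \rank (\sum_(i in S) x i)%MS = #|S|.

Definition Sigma (x : nat -> sp) (i : nat) : sp := (\sum_(j < i.+1) x j)%MS.
Definition pi_ (x : nat -> sp) (i : nat) : sp := (\sum_(1 <= j < i.+1) x j)%MS.

Variable m : nat.

(* Recursive construction, on the REVERSED ordered subset r = rev J = a :: b :: rest
   (a last, b second-to-last element of J); k is fuel (= size r). *)
Fixpoint recJ (x y : nat -> sp) (base : 'I_m -> sp) (k : nat) (r : seq 'I_m)
  {struct k} : sp :=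
  match k with
  | 0 => 0
  | k'.+1 =>
    match r with
    | [:: i] => base i
    | a :: b :: rest =>
        ((x (size r).+1 + recJ x y base k' (b :: rest)) :&:
         (y (size r).+1 + recJ x y base k' (a :: rest)))%MS
    | [::] => 0
    end
  end.

Definition ellJ (x y : nat -> sp) (ell : 'I_m -> sp) (J : seq 'I_m) : sp :=
  recJ x y ell (size J) (rev J).
Definition pJ (x y : nat -> sp) (ell : 'I_m -> sp) (J : seq 'I_m) : sp :=
  recJ x y (fun i => (ell i :&: pi_ x 2)%MS) (size J) (rev J).
End Defs.

(* Main.v *)
Require Import Defs.
From HB Require Import structures.
From mathcomp Require Import all_boot all_order all_algebra zify ring.
From Stdlib Require Import IndefiniteDescription.
Set Implicit Arguments.
Unset Strict Implicit.
Unset Printing Implicit Defensive.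
Import GRing.Theory.
Local Open Scope ring_scope.

Lemma count_int lo hi N : count (fun k => lo <= k < hi)%N (iota 0 N) = (minn hi N - lo)%N.
Proof.
elim: N => [|N IH]; first by rewrite /= minn0.
rewrite -addn1 iotaD count_cat IH /= add0n addn0.
case: (ltnP N hi) => h1; case: (leqP lo N) => h2 /=; lia.
Qed.

Lemma card_int N lo hi : (hi <= N)%N -> #|[set i : 'I_N | lo <= i < hi]%N| = (hi - lo)%N.
Proof.
move=> hN; rewrite cardsE cardE /enum_mem size_filter -enumT.
rewrite (@eq_count _ _ (preim val (fun k => lo <= k < hi)%N)); last by [].
by rewrite -count_map val_enum_ord count_int; congr (_ - _)%N; apply/minn_idPl.
Qed.

Section Main.
Variables (K : fieldType) (n : nat) (x : nat -> 'M[K]_(n.+1)).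
Local Notation N := n.+1.
Hypothesis gp : gen_pos x.
Hypothesis n2 : (2 <= n)%N.

Definition SpI lo hi : 'M[K]_N := (\sum_(i < N | (lo <= i < hi)%N) x i)%MS.

Lemma rankSpI lo hi : (lo <= hi)%N -> (hi <= N)%N -> \rank (SpI lo hi) = (hi - lo)%N.
Proof.
move=> h1 h2; rewrite -(card_int lo h2) -gp /SpI.
by congr mxrank; apply: eq_bigl => i; rewrite inE.
Qed.

Lemma rankSpI_le lo hi : (\rank (SpI lo hi) <= hi - lo)%N.
Proof.
case: (leqP hi N) => h.
  case: (leqP lo hi) => h1; first by rewrite rankSpI.
  rewrite /SpI big_pred0 ?mxrank0 // => i; apply/negbTE; lia.
have -> : SpI lo hi = SpI lo N.
  by apply: eq_bigl => i /=; have := ltn_ord i; lia.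
case: (leqP lo N) => h1; first by rewrite rankSpI //; lia.
rewrite /SpI big_pred0 ?mxrank0 // => i; apply/negbTE; have := ltn_ord i; lia.
Qed.

Lemma subSpI lo hi i k (A : 'M_(k, N)) : (lo <= i < hi)%N -> (i < N)%N -> (A <= x i)%MS -> (A <= SpI lo hi)%MS.
Proof. move=> h1 h2 sA; exact: (sumsmx_sup (Ordinal h2)). Qed.

Lemma SpI_sub lo hi k (B : 'M_(k, N)) :
  (forall i, (lo <= i < hi)%N -> (i < N)%N -> (x i <= B)%MS) -> (SpI lo hi <= B)%MS.
Proof. by move=> H; apply/sumsmx_subP => i hi'; apply: H. Qed.

Lemma SpI_mono lo hi lo' hi' : (lo' <= lo)%N -> (hi <= hi')%N -> (SpI lo hi <= SpI lo' hi')%MS.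
Proof. move=> h1 h2; apply: SpI_sub => i hi1 hi2; apply: (subSpI (i:=i)) => //; lia. Qed.

Lemma pi_SpI j : (j < N)%N -> pi_ x j = SpI 1 j.+1.
Proof.
move=> hj; rewrite /pi_ (big_nat_widen _ _ _ _ _ hj) big_geq_mkord /SpI.
by apply: eq_bigl => i /=; lia.
Qed.

Lemma Sigma_SpI : (2 < N)%N -> Sigma x 2 = SpI 0 3.
Proof.
move=> h; rewrite /Sigma (big_ord_widen _ _ h) /SpI.
by apply: eq_bigl => i /=.
Qed.

Lemma eq_by_rank m1 m2 (A : 'M[K]_(m1,N)) (B : 'M_(m2,N)) :
  (A <= B)%MS -> (\rank B <= \rank A)%N -> (B :=: A)%MS.
Proof.
move=> sAB rBA; apply/eqmx_sym/eqmxP; rewrite -(mxrank_leqif_eq sAB).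
by rewrite eqn_leq rBA mxrankS.
Qed.

Lemma rank_lb m1 m2 (A : 'M[K]_(m1,N)) (B : 'M_(m2,N)) p :
  (SpI 0 N <= A + B)%MS -> (\rank B <= p)%N -> (N <= \rank A + p)%N.
Proof.
move=> sF rB; have := mxrankS sF; rewrite rankSpI // subn0 => h.
apply: leq_trans h _; apply: leq_trans (mxrank_adds_leqif A B) _; lia.
Qed.

Lemma sub_back k (a b : 'rV[K]_N) (B : 'M_(k,N)) :
  (a <= B)%MS -> (a - b <= B)%MS -> (b <= B)%MS.
Proof.
move=> ha hab; have -> : b = a - (a - b) by rewrite opprB addrC subrK.
by rewrite addmx_sub // eqmx_opp.
Qed.

Lemma subB k (a b : 'rV[K]_N) (B : 'M_(k,N)) :
  (a <= B)%MS -> (b <= B)%MS -> (a - b <= B)%MS.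
Proof. by move=> ha hb; rewrite addmx_sub // eqmx_opp. Qed.

Variable m : nat.
Variable e : nat -> 'rV[K]_N.
Hypothesis xe : forall i, (i <= n)%N -> (x i :=: e i)%MS.

Lemma eSpI lo hi i : (lo <= i < hi)%N -> (i <= n)%N -> (e i <= SpI lo hi)%MS.
Proof. by move=> h1 h2; apply: (subSpI (i:=i)) => //; rewrite (xe h2). Qed.

Lemma e_notin i lo hi : (lo <= i < hi)%N -> (hi <= N)%N -> ~ (e i <= SpI lo i + SpI i.+1 hi)%MS.
Proof.
move=> h1 h2 he.
have : (SpI lo hi <= SpI lo i + SpI i.+1 hi)%MS.
  apply: SpI_sub => j hj hjN; case: (ltngtP j i) => hji.
  - by apply: (submx_trans _ (addsmxSl _ _)); apply: (subSpI (i:=j)) => //; lia.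
  - by apply: (submx_trans _ (addsmxSr _ _)); apply: (subSpI (i:=j)) => //; lia.
  - by rewrite hji (xe (_ : i <= n)%N) //; lia.
move/mxrankS; rewrite rankSpI //; last by lia.
move=> h; have := leq_trans h (mxrank_adds_leqif _ _).
have := rankSpI_le lo i; have := rankSpI_le i.+1 hi; lia.
Qed.

Variable c : nat -> K.
Hypothesis cnz : forall i, (3 <= i <= n)%N -> c i != 0.

Fixpoint fc k : K := if k is k'.+1 then - c k'.+4 * fc k' else c 3.
Definition X (u : 'I_m -> K) (r : seq 'I_m) : K :=
  match r with [::] => 0 | [:: a] => u a | a :: b :: rest => fc (size rest) * (u b - u a) end.
Fixpoint Vec (v0 : 'rV[K]_N) (u : 'I_m -> K) (r : seq 'I_m) : 'rV[K]_N :=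
  if r is a :: rest then Vec v0 u rest + X u (a :: rest) *: e (size rest).+2 else v0.

Lemma X_rec u a b rest :
  X u [:: a, b & rest] = c (size rest).+3 * (X u (b :: rest) - X u (a :: rest)).
Proof. by case: rest => [|d rest] /=; ring. Qed.

Lemma fc_nz k : (k + 3 <= n)%N -> fc k != 0.
Proof.
elim: k => [|k IH] h /=; first by apply: cnz; lia.
rewrite mulf_neq0 ?oppr_eq0 ?cnz ?IH //; lia.
Qed.

Lemma Vec_sub v0 u r : ((size r).+1 <= n)%N -> (Vec v0 u r - v0 <= SpI 2 (size r).+2)%MS.
Proof.
elim: r => [|a r IH] /= h; first by rewrite subrr sub0mx.
rewrite addrAC addmx_sub //.
  by apply: submx_trans (IH _) (SpI_mono _ _); lia.
by apply/scalemx_sub/eSpI; lia.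
Qed.

Lemma rank2 (u v : 'rV[K]_N) :
  (u - e 0 <= SpI 2 N)%MS -> (v - e 1 <= SpI 2 N)%MS -> \rank (u + v)%MS = 2%N.
Proof.
move=> hu hv; apply/eqP; rewrite eqn_leq; apply/andP; split.
  apply: leq_trans (mxrank_adds_leqif _ _) _.
  by have := rank_leq_row u; have := rank_leq_row v; lia.
suff hF : (SpI 0 N <= (u + v) + SpI 2 N)%MS.
  by have := rank_lb hF (rankSpI_le 2 N); lia.
apply: SpI_sub => i hi hiN; case: i hi hiN => [|[|i]] hi hiN.
- rewrite (xe (_ : 0 <= n)%N) //; apply: (sub_back (a:=u)).
    exact: submx_trans (addsmxSl u v) (addsmxSl _ _).
  exact: submx_trans hu (addsmxSr _ _).
- rewrite (xe (_ : 1 <= n)%N) //; apply: (sub_back (a:=v)).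
    exact: submx_trans (addsmxSr u v) (addsmxSl _ _).
  exact: submx_trans hv (addsmxSr _ _).
- by apply: (submx_trans _ (addsmxSr _ _)); apply: (subSpI (i:=i.+2)).
Qed.

Lemma rank1 (v : 'rV[K]_N) : (v - e 1 <= SpI 2 N)%MS -> \rank v = 1%N.
Proof.
move=> hv; apply/eqP; rewrite eqn_leq rank_leq_row /=.
suff hF : (SpI 0 N <= v + (SpI 0 1 + SpI 2 N))%MS.
  have hr : (\rank (SpI 0 1 + SpI 2 N)%MS <= 1 + (N - 2))%N.
    apply: leq_trans (mxrank_adds_leqif _ _) _.
    by apply: leq_add; apply: rankSpI_le.
  by have := rank_lb hF hr; lia.
apply: SpI_sub => i hi hiN; case: i hi hiN => [|[|i]] hi hiN.
- by apply: (submx_trans _ (addsmxSr _ _)); apply: (submx_trans _ (addsmxSl _ _)); apply: (subSpI (i:=0)).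
- rewrite (xe (_ : 1 <= n)%N) //; apply: (sub_back (a:=v)); first exact: addsmxSl.
  by apply: (submx_trans _ (addsmxSr _ _)); apply: submx_trans hv (addsmxSr _ _).
- by apply: (submx_trans _ (addsmxSr _ _)); apply: (submx_trans _ (addsmxSr _ _)); apply: (subSpI (i:=i.+2)).
Qed.

Ltac slia := repeat match goal with H : _ |- _ =>
  match type of H with is_true (_ <= _)%N => fail 1 | is_true ((_ <= _)%N && (_ <= _)%N) => fail 1 | _ = _ :> nat => fail 1 | _ => clear H end end; lia.
Ltac vecE := apply/matrixP => ? ?; rewrite !mxE; ring.

Lemma rk_adds m1 m2 (A : 'M[K]_(m1, N)) (B : 'M_(m2, N)) a b :
  (\rank A <= a)%N -> (\rank B <= b)%N -> (\rank (A + B)%MS <= a + b)%N.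
Proof. move=> ha hb; apply: leq_trans (mxrank_adds_leqif _ _) _; exact: leq_add. Qed.

Lemma rk_rV (v : 'rV[K]_N) : (\rank v <= 1)%N.
Proof. exact: rank_leq_row. Qed.

Lemma step_line k (R0 R1 U1 U2 V1 V2 : 'rV[K]_N) (X1 X2 Y1 Y2 : K) :
  (2 <= k)%N -> (k < n)%N ->
  (R0 - e 0 <= SpI 2 k)%MS -> (R1 - e 1 <= SpI 2 k)%MS ->
  U1 = R0 + X1 *: e k -> U2 = R0 + X2 *: e k ->
  V1 = R1 + Y1 *: e k -> V2 = R1 + Y2 *: e k ->
  ((e k.+1 + (U1 + V1)) :&: ((e k + c k.+1 *: e k.+1)%R + (U2 + V2)) :=:
     (U1 + (c k.+1 * (X1 - X2)) *: e k.+1)%R + (V1 + (c k.+1 * (Y1 - Y2)) *: e k.+1)%R)%MS.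
Proof.
move=> hk2 hkn hR0 hR1 hU1 hU2 hV1 hV2.
set eta := (e k + c k.+1 *: e k.+1).
set P := (e k.+1 + (U1 + V1))%MS; set Q := (eta + (U2 + V2))%MS.
set Uw := (U1 + _ *: e k.+1); set Vw := (V1 + _ *: e k.+1).
have hU1P : (U1 <= P)%MS by apply: (submx_trans _ (addsmxSr _ _)); apply: addsmxSl.
have hV1P : (V1 <= P)%MS by apply: (submx_trans _ (addsmxSr _ _)); apply: addsmxSr.
have heP : (e k.+1 <= P)%MS by apply: addsmxSl.
have hU2Q : (U2 <= Q)%MS by apply: (submx_trans _ (addsmxSr _ _)); apply: addsmxSl.
have hV2Q : (V2 <= Q)%MS by apply: (submx_trans _ (addsmxSr _ _)); apply: addsmxSr.
have hetaQ : (eta <= Q)%MS by apply: addsmxSl.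
have HW : ((Uw + Vw)%MS <= P :&: Q)%MS.
  rewrite sub_capmx !addsmx_sub; apply/andP; split; apply/andP; split.
  - by apply: addmx_sub => //; apply: scalemx_sub.
  - by apply: addmx_sub => //; apply: scalemx_sub.
  - have -> : Uw = U2 + (X1 - X2) *: eta by rewrite /Uw /eta hU1 hU2; vecE.
    by apply: addmx_sub => //; apply: scalemx_sub.
  - have -> : Vw = V2 + (Y1 - Y2) *: eta by rewrite /Vw /eta hV1 hV2; vecE.
    by apply: addmx_sub => //; apply: scalemx_sub.
have rW : \rank (Uw + Vw)%MS = 2%N.
  apply: rank2.
    have -> : Uw - e 0 = (R0 - e 0) + (X1 *: e k + (c k.+1 * (X1 - X2)) *: e k.+1).
      by rewrite /Uw hU1; vecE.
    apply: addmx_sub; first by apply: submx_trans hR0 (SpI_mono _ _); slia.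
    by apply: addmx_sub; apply/scalemx_sub/eSpI; slia.
  have -> : Vw - e 1 = (R1 - e 1) + (Y1 *: e k + (c k.+1 * (Y1 - Y2)) *: e k.+1).
    by rewrite /Vw hV1; vecE.
  apply: addmx_sub; first by apply: submx_trans hR1 (SpI_mono _ _); slia.
  by apply: addmx_sub; apply/scalemx_sub/eSpI; slia.
apply: eq_by_rank HW _; rewrite rW.
have rP : (\rank P <= 1 + (1 + 1))%N by do 2?apply: rk_adds; apply: rk_rV.
have rQ : (\rank Q <= 1 + (1 + 1))%N by do 2?apply: rk_adds; apply: rk_rV.
set B := (SpI 2 k + SpI k.+2 N)%MS.
have rB : (\rank B <= (k - 2) + (N - k.+2))%N by apply: rk_adds; apply: rankSpI_le.
set T := ((P + Q) + B)%MS.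
have hPT : (P <= T)%MS by apply: (submx_trans _ (addsmxSl _ _)); apply: addsmxSl.
have hQT : (Q <= T)%MS by apply: (submx_trans _ (addsmxSl _ _)); apply: addsmxSr.
have hB1 : (SpI 2 k <= T)%MS by apply: (submx_trans _ (addsmxSr _ _)); apply: addsmxSl.
have hB2 : (SpI k.+2 N <= T)%MS by apply: (submx_trans _ (addsmxSr _ _)); apply: addsmxSr.
have he1 : (e k.+1 <= T)%MS by apply: (submx_trans _ hPT).
have he0 : (e k <= T)%MS.
  apply: (sub_back (a:=eta)); first exact: (submx_trans hetaQ hQT).
  have -> : eta - e k = c k.+1 *: e k.+1 by rewrite /eta; vecE.
  exact: scalemx_sub.
have hF : (SpI 0 N <= T)%MS.
  apply: SpI_sub => i hi hiN.
  have hin : (i <= n)%N by slia.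
  rewrite (xe hin).
  case: (ltngtP i k.+1) => hik.
  - case: (ltngtP i k) => hik'.
    + case: i hi hiN hin hik hik' => [|[|i]] hi hiN hin hik hik'.
      * apply: (sub_back (a:=U1)); first exact: (submx_trans hU1P hPT).
        have -> : U1 - e 0 = (R0 - e 0) + X1 *: e k by rewrite hU1; vecE.
        by apply: addmx_sub; [apply: submx_trans hR0 hB1 | apply: scalemx_sub].
      * apply: (sub_back (a:=V1)); first exact: (submx_trans hV1P hPT).
        have -> : V1 - e 1 = (R1 - e 1) + Y1 *: e k by rewrite hV1; vecE.
        by apply: addmx_sub; [apply: submx_trans hR1 hB1 | apply: scalemx_sub].
      * by apply: (submx_trans _ hB1); apply: eSpI; slia.
    + slia.
    + by rewrite hik'.
  - by apply: (submx_trans _ hB2); apply: eSpI; slia.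
  - by rewrite hik.
have rPQ := rank_lb hF rB.
have := mxrank_sum_cap P Q; slia.
Qed.

Lemma step_point k (R1 V1 V2 : 'rV[K]_N) (Y1 Y2 : K) :
  (2 <= k)%N -> (k < n)%N -> (R1 - e 1 <= SpI 2 k)%MS ->
  V1 = R1 + Y1 *: e k -> V2 = R1 + Y2 *: e k ->
  ((e k.+1 + V1) :&: ((e k + c k.+1 *: e k.+1)%R + V2) :=:
     (V1 + (c k.+1 * (Y1 - Y2)) *: e k.+1)%R)%MS.
Proof.
move=> hk2 hkn hR1 hV1 hV2.
set eta := (e k + c k.+1 *: e k.+1).
set P := (e k.+1 + V1)%MS; set Q := (eta + V2)%MS.
set Vw := (V1 + _ *: e k.+1).
have hV1P : (V1 <= P)%MS by apply: addsmxSr.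
have heP : (e k.+1 <= P)%MS by apply: addsmxSl.
have hV2Q : (V2 <= Q)%MS by apply: addsmxSr.
have hetaQ : (eta <= Q)%MS by apply: addsmxSl.
have HW : (Vw <= P :&: Q)%MS.
  rewrite sub_capmx; apply/andP; split.
  - by apply: addmx_sub => //; apply: scalemx_sub.
  - have -> : Vw = V2 + (Y1 - Y2) *: eta by rewrite /Vw /eta hV1 hV2; vecE.
    by apply: addmx_sub => //; apply: scalemx_sub.
have rW : \rank Vw = 1%N.
  apply: rank1.
  have -> : Vw - e 1 = (R1 - e 1) + (Y1 *: e k + (c k.+1 * (Y1 - Y2)) *: e k.+1).
    by rewrite /Vw hV1; vecE.
  apply: addmx_sub; first by apply: submx_trans hR1 (SpI_mono _ _); slia.
  by apply: addmx_sub; apply/scalemx_sub/eSpI; slia.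
apply: eq_by_rank HW _; rewrite rW.
have rP : (\rank P <= 1 + 1)%N by apply: rk_adds; apply: rk_rV.
have rQ : (\rank Q <= 1 + 1)%N by apply: rk_adds; apply: rk_rV.
set B := (SpI 0 1 + (SpI 2 k + SpI k.+2 N))%MS.
have rB : (\rank B <= (1 - 0) + ((k - 2) + (N - k.+2)))%N.
  by apply: rk_adds; [|apply: rk_adds]; apply: rankSpI_le.
set T := ((P + Q) + B)%MS.
have hPT : (P <= T)%MS by apply: (submx_trans _ (addsmxSl _ _)); apply: addsmxSl.
have hQT : (Q <= T)%MS by apply: (submx_trans _ (addsmxSl _ _)); apply: addsmxSr.
have hB0 : (SpI 0 1 <= T)%MS by apply: (submx_trans _ (addsmxSr _ _)); apply: addsmxSl.
have hB1 : (SpI 2 k <= T)%MS.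
  by apply: (submx_trans _ (addsmxSr _ _)); apply: (submx_trans _ (addsmxSr _ _)); apply: addsmxSl.
have hB2 : (SpI k.+2 N <= T)%MS.
  by apply: (submx_trans _ (addsmxSr _ _)); apply: (submx_trans _ (addsmxSr _ _)); apply: addsmxSr.
have he1 : (e k.+1 <= T)%MS by apply: (submx_trans _ hPT).
have he0 : (e k <= T)%MS.
  apply: (sub_back (a:=eta)); first exact: (submx_trans hetaQ hQT).
  have -> : eta - e k = c k.+1 *: e k.+1 by rewrite /eta; vecE.
  exact: scalemx_sub.
have hF : (SpI 0 N <= T)%MS.
  apply: SpI_sub => i hi hiN.
  have hin : (i <= n)%N by slia.
  rewrite (xe hin).
  case: (ltngtP i k.+1) => hik.
  - case: (ltngtP i k) => hik'.
    + case: i hi hiN hin hik hik' => [|[|i]] hi hiN hin hik hik'.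
      * by apply: (submx_trans _ hB0); apply: eSpI.
      * apply: (sub_back (a:=V1)); first exact: (submx_trans hV1P hPT).
        have -> : V1 - e 1 = (R1 - e 1) + Y1 *: e k by rewrite hV1; vecE.
        by apply: addmx_sub; [apply: submx_trans hR1 hB1 | apply: scalemx_sub].
      * by apply: (submx_trans _ hB1); apply: eSpI; slia.
    + slia.
    + by rewrite hik'.
  - by apply: (submx_trans _ hB2); apply: eSpI; slia.
  - by rewrite hik.
have rPQ := rank_lb hF rB.
have := mxrank_sum_cap P Q; slia.
Qed.

Variables (y : nat -> 'M[K]_N) (ell : 'I_m -> 'M[K]_N) (s t : 'I_m -> K).
Hypothesis yc : forall i, (3 <= i <= n)%N -> (y i :=: (e i.-1 + c i *: e i)%R)%MS.
Hypothesis ellst : forall a, (ell a :=: (e 0 + s a *: e 2)%R + (e 1 + t a *: e 2)%R)%MS.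
Hypothesis pt : forall a, (ell a :&: pi_ x 2 :=: (e 1 + t a *: e 2)%R)%MS.

Definition Ur r := Vec (e 0) s r.
Definition Vr r := Vec (e 1) t r.

Lemma Vec_cons v0 u a r : Vec v0 u (a :: r) = Vec v0 u r + X u (a :: r) *: e (size r).+2.
Proof. by []. Qed.

Lemma recJ_cons2 (base : 'I_m -> 'M[K]_N) a b rest :
  recJ x y base (size [:: a, b & rest]) [:: a, b & rest] =
  ((x (size rest).+3 + recJ x y base (size (b :: rest)) (b :: rest)) :&:
   (y (size rest).+3 + recJ x y base (size (a :: rest)) (a :: rest)))%MS.
Proof. by []. Qed.

Lemma main_ind k r : size r = k.+1 -> (k.+2 <= n)%N ->
  ((recJ x y ell (size r) r :=: Ur r + Vr r)%MS *
   (recJ x y (fun i => ell i :&: pi_ x 2)%MS (size r) r :=: Vr r)%MS)%type.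
Proof.
elim: k r => [|k IH] r hs hn.
  case: r hs => [|a [|b rest]] hs; try discriminate.
  by split; [exact: ellst | exact: pt].
case: r hs => [|a [|b rest]] hs; try discriminate.
case: hs => hs.
have [IH1 IH1p] := IH (b :: rest) (congr1 S hs) (ltnW hn).
have [IH2 IH2p] := IH (a :: rest) (congr1 S hs) (ltnW hn).
have hx : ((size rest).+3 <= n)%N by rewrite hs.
have hy : (3 <= (size rest).+3 <= n)%N by rewrite hs.
have hR0 : (Ur rest - e 0 <= SpI 2 (size rest).+2)%MS.
  by apply: Vec_sub; rewrite hs; slia.
have hR1 : (Vr rest - e 1 <= SpI 2 (size rest).+2)%MS.
  by apply: Vec_sub; rewrite hs; slia.
rewrite recJ_cons2 /Ur /Vr !(Vec_cons _ _ a (b :: rest)) !X_rec; split.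
  apply: eqmx_trans (cap_eqmx (adds_eqmx (xe hx) IH1) (adds_eqmx (yc hy) IH2)) _.
  by apply: (step_line (k := (size rest).+2)) => //; try by rewrite hs.

apply: eqmx_trans (cap_eqmx (adds_eqmx (xe hx) IH1p) (adds_eqmx (yc hy) IH2p)) _.
by apply: (step_point (k := (size rest).+2)) => //; try by rewrite hs.
Qed.

Lemma cap_pi r hi : ((size r).+1 <= n)%N -> ((size r).+2 <= hi)%N -> (hi <= N)%N ->
  ((Ur r + Vr r) :&: SpI 1 hi :=: Vr r)%MS.
Proof.
move=> h1 h2 h3.
have hU := Vec_sub (e 0) s h1; have hV := Vec_sub (e 1) t h1.
rewrite -/(Ur r) in hU; rewrite -/(Vr r) in hV.
have hU' : (Ur r - e 0 <= SpI 2 N)%MS by apply: submx_trans hU (SpI_mono _ _).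
have hV' : (Vr r - e 1 <= SpI 2 N)%MS by apply: submx_trans hV (SpI_mono _ _).
have HW : (Vr r <= (Ur r + Vr r) :&: SpI 1 hi)%MS.
  rewrite sub_capmx addsmxSr /=.
  have -> : Vr r = e 1 + (Vr r - e 1) by rewrite addrC subrK.
  apply: addmx_sub; first by apply: eSpI; slia.
  by apply: submx_trans hV (SpI_mono _ _); slia.
apply: eq_by_rank HW _; rewrite (rank1 hV').
have r2 := rank2 hU' hV'.
have rS : \rank (SpI 1 hi) = (hi - 1)%N by rewrite rankSpI //; slia.
set T := ((Ur r + Vr r)%MS + SpI 1 hi + SpI hi N)%MS.
have hF : (SpI 0 N <= T)%MS.
  apply: SpI_sub => i hi1 hiN.
  have hin : (i <= n)%N by rewrite -ltnS.
  rewrite (xe hin).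
  case: (ltnP i hi) => hih.
    case: i hi1 hiN hin hih => [|i] hi1 hiN hin hih.
      apply: (sub_back (a := Ur r)).
        by apply: (submx_trans _ (addsmxSl _ _)); apply: (submx_trans _ (addsmxSl _ _)); apply: addsmxSl.
      apply: (submx_trans _ (addsmxSl _ _)); apply: (submx_trans _ (addsmxSr _ _)).
      by apply: submx_trans hU (SpI_mono _ _); slia.
    by apply: (submx_trans _ (addsmxSl _ _)); apply: (submx_trans _ (addsmxSr _ _)); apply: eSpI.
  by apply: (submx_trans _ (addsmxSr _ _)); apply: eSpI => //; rewrite hih.
have := rank_lb hF (rankSpI_le hi N).
have := mxrank_sum_cap (Ur r + Vr r)%MS (SpI 1 hi).
rewrite r2 rS => ha hb.
have := rank_lb hF (rankSpI_le hi N).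
have hsum : (\rank ((Ur r + Vr r)%MS + SpI 1 hi)%MS + (N - hi) >= N)%N.
  apply: leq_trans (rank_lb hF (rankSpI_le hi N)) _.
  by apply: leq_add.
move=> _; slia.
Qed.

Lemma V_eq (v w : 'rV[K]_N) : (v - e 1 <= SpI 2 N)%MS -> (w - e 1 <= SpI 2 N)%MS ->
  (v <= w)%MS -> v = w.
Proof.
move=> hv hw /sub_rVP [a ha].
case: (eqVneq a 1) => [a1|a1]; first by rewrite ha a1 scale1r.
exfalso.
have h : ((1 - a) *: e 1 <= SpI 2 N)%MS.
  have -> : (1 - a) *: e 1 = a *: (w - e 1) - (v - e 1) by rewrite ha; vecE.
  by apply: subB => //; apply: scalemx_sub.
rewrite (eqmx_scale _ (_ : 1 - a != 0)) in h; last by rewrite subr_eq0 eq_sym.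
apply: (@e_notin 1 1 N) => //; first by slia.
exact: submx_trans h (addsmxSr _ _).
Qed.

Hypothesis tinj : injective t.

Lemma Vdiff k r1 r2 : uniq r1 -> uniq r2 -> size r1 = k.+1 -> size r2 = k.+1 ->
  (k.+2 <= n)%N -> r1 != r2 ->
  exists j d, [/\ (2 <= j <= k.+2)%N, d != 0 & (Vr r1 - Vr r2 - d *: e j <= SpI j.+1 k.+3)%MS].
Proof.
elim: k r1 r2 => [|k IH] r1 r2 u1 u2 s1 s2 hn neq.
  case: r1 u1 s1 neq => [|a1 [|? ?]] u1 s1 neq; try discriminate.
  case: r2 u2 s2 neq => [|a2 [|? ?]] u2 s2 neq; try discriminate.
  exists 2%N, (t a1 - t a2); split => //.
    rewrite subr_eq0; apply/eqP => /tinj h; move: neq; by rewrite h eqxx.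
  have -> : Vr [:: a1] - Vr [:: a2] - (t a1 - t a2) *: e 2 = 0 by rewrite /Vr /=; vecE.
  exact: sub0mx.
case: r1 u1 s1 neq => [|a1 r1] u1 s1 neq; first discriminate.
case: r2 u2 s2 neq => [|a2 r2] u2 s2 neq; first discriminate.
case: s1 => s1; case: s2 => s2.
move: u1 u2 => /andP [na1 u1] /andP [na2 u2].
have hsplit : forall (v : 'rV[K]_N), Vr (a1 :: r1) - Vr (a2 :: r2) - v =
   (Vr r1 - Vr r2 - v) + (X t (a1 :: r1) - X t (a2 :: r2)) *: e k.+3.
  by move=> v; rewrite /Vr !Vec_cons s1 s2; vecE.
case: (eqVneq r1 r2) => hr.
  subst r2.
  have ha : a1 != a2 by apply: contraNneq neq => ->.
  clear neq.
  case: r1 s1 s2 na1 na2 u1 u2 hsplit hn => [|b rest] //= s1 s2 na1 na2 u1 u2 hsplit hn.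
  case: s1 => s1.
  exists k.+3, (X t [:: a1, b & rest] - X t [:: a2, b & rest]); split.
  - by slia.
  - have -> : X t [:: a1, b & rest] - X t [:: a2, b & rest] = fc (size rest) * (t a2 - t a1).
      by rewrite /=; ring.
    apply: mulf_neq0; first by apply: fc_nz; rewrite s1; slia.
    by rewrite subr_eq0; apply/eqP => /tinj h; move: ha; rewrite h eqxx.
  - by rewrite hsplit subrr sub0r addNr sub0mx.
have [j [d [hj hd hres]]] := IH r1 r2 u1 u2 s1 s2 (ltnW hn) hr.
exists j, d; split => //; first by slia.
rewrite hsplit; apply: addmx_sub.
  by apply: submx_trans hres (SpI_mono _ _); slia.
by apply/scalemx_sub/eSpI; slia.
Qed.

Lemma Vr_lt r1 (a b : 'I_m) (rest : seq 'I_m) : (1 <= size r1)%N -> (size r1 < (size rest).+2)%N ->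
  uniq [:: a, b & rest] -> ((size rest).+4 <= N)%N -> Vr r1 != Vr [:: a, b & rest].
Proof.
move=> h1 h12 u2 h2; apply/eqP => heq.
move: u2 => /andP [na _].
have hab : a != b by apply: contraNneq na => ->; rewrite mem_head.
have hX : X t [:: a, b & rest] != 0.
  rewrite /=; apply: mulf_neq0; first by apply: fc_nz; slia.
  by rewrite subr_eq0; apply/eqP => /tinj h; move: hab; rewrite h eqxx.
have h3 : (X t [:: a, b & rest] *: e (size rest).+3 <= SpI 2 (size rest).+3)%MS.
  have -> : X t [:: a, b & rest] *: e (size rest).+3 = (Vr r1 - e 1) - (Vr (b :: rest) - e 1).
    by rewrite heq /Vr Vec_cons; vecE.
  apply: subB.
    by apply: submx_trans (Vec_sub _ _ _) (SpI_mono _ _); slia.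
  by apply: submx_trans (Vec_sub _ _ _) (SpI_mono _ _); rewrite /=; slia.
rewrite (eqmx_scale _ hX) in h3.
apply: (@e_notin (size rest).+3 2 (size rest).+4); first by slia.
  by slia.
exact: submx_trans h3 (addsmxSl _ _).
Qed.

Lemma Vr_inj r1 r2 : uniq r1 -> uniq r2 -> (1 <= size r1 <= n - 1)%N -> (1 <= size r2 <= n - 1)%N ->
  r1 != r2 -> Vr r1 != Vr r2.
Proof.
move=> u1 u2 h1 h2 neq.
case: (ltngtP (size r1) (size r2)) => hsz.
- case: r2 u2 h2 neq hsz => [|a [|b rest]] u2 h2 neq hsz; rewrite /= in h2 hsz; try by slia.
    by move: h1 hsz; move: (size r1) => z; slia.
  apply: Vr_lt => //; first by move: h1; move: (size r1) => z; slia.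
  by move: h2; move: (size rest) => z; slia.
- case: r1 u1 h1 neq hsz => [|a [|b rest]] u1 h1 neq hsz; rewrite /= in h1 hsz; try by slia.
    by move: h2 hsz; move: (size r2) => z; slia.
  rewrite eq_sym; apply: Vr_lt => //; first by move: h2; move: (size r2) => z; slia.
  by move: h1; move: (size rest) => z; slia.
have [k s1] : exists k, size r1 = k.+1.
  by move: h1; case: (size r1) => [|k] h1; [slia | exists k].
have s2 : size r2 = k.+1 by rewrite -hsz.
have hk : (k.+2 <= n)%N by move: h1; rewrite s1; slia.
have [j [d [hj hd hres]]] := Vdiff u1 u2 s1 s2 hk neq.
apply/eqP => heq; move: hres; rewrite heq subrr sub0r.
rewrite (eqmx_opp) (eqmx_scale _ hd) => he.
apply: (@e_notin j j k.+3); first by slia.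
  by slia.
exact: submx_trans he (addsmxSr _ _).
Qed.

Lemma rec_facts J : uniq J -> (1 <= size J <= n - 1)%N ->
  ((recJ x y ell (size (rev J)) (rev J) :=: Ur (rev J) + Vr (rev J))%MS *
   (recJ x y (fun i => ell i :&: pi_ x 2)%MS (size (rev J)) (rev J) :=: Vr (rev J))%MS)%type.
Proof.
move=> uJ hJ; apply: (main_ind (k := (size J).-1)).
  by rewrite size_rev; move: hJ; case: (size J) => [|k] /=; slia.
by move: hJ; case: (size J) => [|k] /=; slia.
Qed.

Lemma master :
  (forall J : seq 'I_m, uniq J -> (1 <= size J <= n - 1)%N ->
     [/\ \rank (ellJ x y ell J) = 2%N,
         \rank (pJ x y ell J) = 1%N &
         ((ellJ x y ell J :&: pi_ x (size J).+1) == pJ x y ell J)%MS])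
  /\
  (forall J1 J2 : seq 'I_m, uniq J1 -> uniq J2 ->
     (1 <= size J1 <= n - 1)%N -> (1 <= size J2 <= n - 1)%N -> J1 != J2 ->
     ~~ (ellJ x y ell J1 == ellJ x y ell J2)%MS /\
     ~~ (pJ x y ell J1 == pJ x y ell J2)%MS).
Proof.
have hVs : forall J, (1 <= size J <= n - 1)%N ->
    (Ur (rev J) - e 0 <= SpI 2 N)%MS /\ (Vr (rev J) - e 1 <= SpI 2 N)%MS.
  move=> J hJ; split.
    apply: submx_trans (Vec_sub _ _ _) (SpI_mono _ _); rewrite ?size_rev //; slia.
  apply: submx_trans (Vec_sub _ _ _) (SpI_mono _ _); rewrite ?size_rev //; slia.
have hcap : forall J hi, (1 <= size J <= n - 1)%N -> ((size J).+2 <= hi)%N -> (hi <= N)%N ->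
    ((Ur (rev J) + Vr (rev J)) :&: SpI 1 hi :=: Vr (rev J))%MS.
  move=> J hi hJ h1 h2; apply: cap_pi; rewrite ?size_rev //; slia.
split.
  move=> J uJ hJ; have [M1 M2] := rec_facts uJ hJ.
  have [hU hV] := hVs J hJ.
  rewrite /ellJ /pJ -(size_rev J) M1 M2 (rank2 hU hV) (rank1 hV); split => //.
  apply/eqmxP; rewrite pi_SpI; last by rewrite size_rev; slia.
  apply: eqmx_trans (cap_eqmx M1 (eqmx_refl _)) _.
  apply: eqmx_trans (hcap J (size (rev J)).+2 hJ _ _) (eqmx_sym M2); rewrite size_rev; slia.
move=> J1 J2 u1 u2 h1 h2 neq.
have [M1 M1p] := rec_facts u1 h1; have [M2 M2p] := rec_facts u2 h2.
have [hU1 hV1] := hVs J1 h1; have [hU2 hV2] := hVs J2 h2.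
have hne : Vr (rev J1) != Vr (rev J2).
  apply: Vr_inj; rewrite ?rev_uniq ?size_rev //.
  by apply: contra neq => /eqP /(can_inj revK) ->.
have key : (Vr (rev J1) :=: Vr (rev J2))%MS -> False.
  move=> E; move/eqP: hne; apply; apply: V_eq => //; by rewrite E.
rewrite /ellJ /pJ -(size_rev J1) -(size_rev J2); split; apply/negP => /eqmxP H.
  apply: key; apply: eqmx_trans (eqmx_sym (hcap J1 N h1 _ _)) _; try slia.
  apply: eqmx_trans (hcap J2 N h2 _ _); try slia.
  apply: cap_eqmx (eqmx_refl _).
  exact: eqmx_trans (eqmx_sym M1) (eqmx_trans H M2).
apply: key; exact: eqmx_trans (eqmx_sym M1p) (eqmx_trans H M2p).
Qed.

End Main.

Lemma fchoice (A B : Type) (P : A -> B -> Prop) :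
  (forall a, exists b, P a b) -> exists f, forall a, P a (f a).
Proof.
move=> H; exists (fun a => proj1_sig (constructive_indefinite_description _ (H a))).
by move=> a; exact: proj2_sig _.
Qed.

Lemma rank1_nz (K : fieldType) k N (A : 'M[K]_(k, N.+1)) : \rank A = 1%N -> (A :=: nz_row A)%MS.
Proof.
move=> rA; apply: eq_by_rank; first exact: nz_row_sub.
rewrite rank_rV rA nz_row_eq0 -mxrank_eq0 rA //.
Qed.

Lemma eq_rank1 (K : fieldType) k1 k2 N (A : 'M[K]_(k1, N.+1)) (B : 'M[K]_(k2, N.+1)) :
  \rank A = 1%N -> \rank B = 1%N -> (A <= B)%MS -> (A == B)%MS.
Proof. by move=> rA rB sAB; apply/eqmxP/eqmx_sym/eq_by_rank => //; rewrite rA rB. Qed.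

Lemma pi2E (K : fieldType) n (x : nat -> 'M[K]_(n.+1)) : pi_ x 2 = (x 1%N + x 2%N)%MS.
Proof. by rewrite /pi_ big_ltn // big_nat1. Qed.

Lemma Sigma2E (K : fieldType) n (x : nat -> 'M[K]_(n.+1)) : Sigma x 2 = (x 0%N + (x 1%N + x 2%N))%MS.
Proof. by rewrite /Sigma -(big_mkord xpredT) big_ltn // big_ltn // big_nat1. Qed.


Lemma scal11 (K : fieldType) N (u : 'M[K]_1) (v : 'rV[K]_N) : u *m v = u 0 0 *: v.
Proof. by rewrite {1}(mx11_scalar u) mul_scalar_mx. Qed.

Unset Implicit Arguments.

Theorem lemma2p1 (K : fieldType) (n : nat) (x y : nat -> 'M[K]_(n.+1))
  (m : nat) (ell : 'I_m -> 'M[K]_(n.+1)) :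
  (2 <= n)%N ->
  (forall i : nat, (i <= n)%N -> \rank (x i) = 1%N) ->
  gen_pos x ->
  (forall i : nat, (3 <= i <= n)%N ->
     [/\ \rank (y i) = 1%N, (y i <= x i.-1 + x i)%MS,
         ~~ (y i == x i.-1)%MS & ~~ (y i == x i)%MS]) ->
  (forall i : 'I_m, \rank (ell i) = 2%N /\ (ell i <= Sigma x 2)%MS) ->
  (forall i : 'I_m, \rank (ell i :&: pi_ x 2)%MS = 1%N) ->
  (forall i j : 'I_m, i != j ->
     ~~ ((ell i :&: pi_ x 2) == (ell j :&: pi_ x 2))%MS) ->
  (forall i : 'I_m, ~~ ((ell i :&: pi_ x 2) == x 2%N)%MS) ->
  (forall J : seq 'I_m, uniq J -> (1 <= size J <= n - 1)%N ->
     [/\ \rank (ellJ x y ell J) = 2%N,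
         \rank (pJ x y ell J) = 1%N &
         ((ellJ x y ell J :&: pi_ x (size J).+1) == pJ x y ell J)%MS])
  /\
  (forall J1 J2 : seq 'I_m, uniq J1 -> uniq J2 ->
     (1 <= size J1 <= n - 1)%N -> (1 <= size J2 <= n - 1)%N -> J1 != J2 ->
     ~~ (ellJ x y ell J1 == ellJ x y ell J2)%MS /\
     ~~ (pJ x y ell J1 == pJ x y ell J2)%MS).
Proof.
move=> n2 hx gp hy hell hp hdist hnx2.
pose e i := nz_row (x i).
have xe : forall i, (i <= n)%N -> (x i :=: e i)%MS by move=> i hi; apply: rank1_nz; apply: hx.
have hc : forall i, exists ci : K, (3 <= i <= n)%N -> ci != 0 /\ (y i == (e i.-1 + ci *: e i)%R)%MS.
  move=> i; case: (boolP (3 <= i <= n)%N) => hi; last by exists 0.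
  have [ry sy ny1 ny2] := hy i hi.
  have hi1 : (i.-1 <= n)%N by lia.
  have hi2 : (i <= n)%N by lia.
  have eY := rank1_nz ry.
  have : (nz_row (y i) <= (e i.-1 + e i))%MS.
    by rewrite -eY -(adds_eqmx (xe _ hi1) (xe _ hi2)).
  case/sub_addsmxP => [[u1 u2] /= hu].
  rewrite !scal11 in hu.
  have hal : u1 0 0 != 0.
    apply/eqP => h0; move/negP: ny2; apply; apply: eq_rank1 => //; first exact: hx.
    by rewrite eY (xe _ hi2) hu h0 scale0r add0r scalemx_sub.
  have hbe : u2 0 0 != 0.
    apply/eqP => h0; move/negP: ny1; apply; apply: eq_rank1 => //; first exact: hx.
    by rewrite eY (xe _ hi1) hu h0 scale0r addr0 scalemx_sub.
  exists (u2 0 0 / u1 0 0) => _; split; first by rewrite mulf_neq0 ?invr_eq0.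
  apply/eqmxP; apply: eqmx_trans eY _.
  apply: eqmx_trans (eqmx_sym (eqmx_scale _ (invr_neq0 hal))) _.
  have -> : (u1 0 0)^-1 *: nz_row (y i) = e i.-1 + (u2 0 0 / u1 0 0) *: e i.
    by rewrite hu; apply/matrixP => ? ?; rewrite !mxE; field.
  exact: eqmx_refl.
have [c hcf] := fchoice hc.
have cnz : forall i, (3 <= i <= n)%N -> c i != 0 by move=> i hi; case: (hcf i hi).
have yc : forall i, (3 <= i <= n)%N -> (y i :=: (e i.-1 + c i *: e i)%R)%MS.
  by move=> i hi; case: (hcf i hi) => _ /eqmxP.
have pi2 : (pi_ x 2 :=: e 1%N + e 2%N)%MS.
  by rewrite pi2E; apply: adds_eqmx; apply: xe; lia.
have sig2 : (Sigma x 2 :=: e 0%N + (e 1%N + e 2%N))%MS.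
  rewrite Sigma2E; apply: adds_eqmx; first by apply: xe; lia.
  by apply: adds_eqmx; apply: xe; lia.
have hst : forall a, exists p : K * K,
    (ell a == (e 0%N + p.1 *: e 2%N)%R + (e 1%N + p.2 *: e 2%N)%R)%MS &&
    (ell a :&: pi_ x 2 == (e 1%N + p.2 *: e 2%N)%R)%MS.
  move=> a; have [rl sl] := hell a; have rp := hp a.
  set p := (ell a :&: pi_ x 2)%MS.
  have eP := rank1_nz rp.
  have : (nz_row p <= e 1%N + e 2%N)%MS by rewrite -eP -pi2 capmxSr.
  case/sub_addsmxP => [[v1 v2] /= hv]; rewrite !scal11 in hv.
  have ha1 : v1 0 0 != 0.
    apply/eqP => h0; move/negP: (hnx2 a); apply; apply: eq_rank1 => //; first by apply: hx; lia.
    by rewrite eP (xe 2%N n2) hv h0 scale0r add0r scalemx_sub.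
  pose tt := v2 0 0 / v1 0 0.
  have pV : (p :=: (e 1%N + tt *: e 2%N)%R)%MS.
    apply: eqmx_trans eP _.
    apply: eqmx_trans (eqmx_sym (eqmx_scale _ (invr_neq0 ha1))) _.
    have -> : (v1 0 0)^-1 *: nz_row p = e 1%N + tt *: e 2%N.
      by rewrite hv /tt; apply/matrixP => ? ?; rewrite !mxE; field.
    exact: eqmx_refl.
  have nle : ~~ (ell a <= pi_ x 2)%MS.
    apply/negP => h; move: rp; rewrite /p (capmx_idPl h) rl //.
  case/row_subPn: nle => i0 hi0.
  set w := row i0 (ell a) in hi0 *.
  have wl : (w <= ell a)%MS by apply: row_sub.
  have : (w <= e 0%N + (e 1%N + e 2%N))%MS by rewrite -sig2; apply: submx_trans wl sl.
  case/sub_addsmxP => [[b0 z] /= hw].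
  have : (z *m (e 1%N + e 2%N)%MS <= e 1%N + e 2%N)%MS by apply: submxMl.
  case/sub_addsmxP => [[z1 z2] /= hz].
  rewrite hz !scal11 in hw.
  have hb0 : b0 0 0 != 0.
    apply/eqP => h0; move/negP: hi0; apply.
    rewrite hw h0 scale0r add0r pi2.
    by apply: addmx_sub_adds; apply: scalemx_sub.
  pose ss := (b0 0 0)^-1 * (z2 0 0 - z1 0 0 * tt).
  have Vl : ((e 1%N + tt *: e 2%N)%R <= ell a)%MS by rewrite -pV capmxSl.
  have Ul : ((e 0%N + ss *: e 2%N)%R <= ell a)%MS.
    have -> : e 0%N + ss *: e 2%N = (b0 0 0)^-1 *: (w - z1 0 0 *: (e 1%N + tt *: e 2%N)).
      by rewrite hw /ss; apply/matrixP => ? ?; rewrite !mxE; field.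
    by apply/scalemx_sub/addmx_sub => //; rewrite eqmx_opp scalemx_sub.
  exists (ss, tt); rewrite /=; apply/andP; split; apply/eqmxP; last exact: pV.
  apply: eq_by_rank; first by rewrite addsmx_sub Ul Vl.
  rewrite rl (rank2 gp n2 xe) //.
    have -> : e 0%N + ss *: e 2%N - e 0%N = ss *: e 2%N by rewrite addrC addKr.
    by apply/scalemx_sub/eSpI.
  have -> : e 1%N + tt *: e 2%N - e 1%N = tt *: e 2%N by rewrite addrC addKr.
  by apply/scalemx_sub/eSpI.
have [st hstf] := fchoice hst.
pose s a := (st a).1; pose t a := (st a).2.
have ellst : forall a, (ell a :=: (e 0%N + s a *: e 2%N)%R + (e 1%N + t a *: e 2%N)%R)%MS.
  by move=> a; case/andP: (hstf a) => /eqmxP.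
have pt : forall a, (ell a :&: pi_ x 2 :=: (e 1%N + t a *: e 2%N)%R)%MS.
  by move=> a; case/andP: (hstf a) => _ /eqmxP.
have tinj : injective t.
  move=> a b hab; apply/eqP; apply/negPn/negP => hne.
  move/negP: (hdist a b hne); apply; apply/eqmxP.
  by apply: eqmx_trans (pt a) _; rewrite hab; apply: eqmx_sym.
exact: (master gp n2 xe cnz yc ellst pt tinj).
Qed.
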